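(* Let $q$ be a prime power and $\eta\ge0$ an integer. Let $\Delta^*=\bigcup_{(\delta_T,\delta_X)}\Delta^*(\delta_T,\delta_X)$, the union over $(\delta_T,\delta_X)\in\mathbb{Z}\times\mathbb{N}$ with $\delta_T+\eta\delta_X\ge0$. Then $\Delta^*$ is exactly the set of monomials of $R$ that are not divisible by the leading term of any polynomial of $\mathcal{G}$.
   Context: $R=\mathbb{F}_q[T_1,T_2,X_1,X_2]$; the bidegree of $T_1^{c_1}T_2^{c_2}X_1^{d_1}X_2^{d_2}$ is $(c_1+c_2-\eta d_1,d_1+d_2)$; $R(\delta_T,\delta_X)$ is the span of monomials of that bidegree, $\mathcal{M}(\delta_T,\delta_X)$ the set of these monomials; $\delta=\delta_T+\eta\delta_X$. Leading terms are taken for the monomial order: $T_1^{c'_1}T_2^{c'_2}X_1^{d'_1}X_2^{d'_2}<T_1^{c_1}T_2^{c_2}X_1^{d_1}X_2^{d_2}$ iff $d'_1+d'_2<d_1+d_2$, or ($d'_1+d'_2=d_1+d_2$ and $d'_2<d_2$), or ($d'_1=d_1,d'_2=d_2,c'_2<c_2$), or ($d'_1=d_1,d'_2=d_2,c'_2=c_2,c'_1<c_1$). For $\delta\ge0$: $\mathcal{P}=\{(a,b)\in\mathbb{N}^2:a\le\delta_X,\eta a+b\le\delta\}$; $M(d_2,c_2)=T_1^{\delta-\eta d_2-c_2}T_2^{c_2}X_1^{\delta_X-d_2}X_2^{d_2}$; $A=\delta_X$ if $\delta_T\ge0$, $A=\delta/\eta$ if $\delta_T<0$; $\mathcal{A}_X=\{\alpha\in\mathbb{N}:\alpha\le\min(\lfloor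 A\rfloor,q-1)\}\cup(\{A\}\cap\mathbb{N})$; $\mathcal{K}=\{(\alpha,\beta)\in\mathbb{N}^2:\alpha\in\mathcal{A}_X,\beta\le\min(\delta-\eta\alpha,q)-1\text{ or }\beta=\delta-\eta\alpha\}$; (H): $\eta\ge2$, $\delta_T<0$, $\eta\mid\delta_T$, $q\le\delta_X+\delta_T/\eta$; $\mathcal{K}^*=\mathcal{K}\setminus\{(\delta/\eta,0)\}$ if (H), else $\mathcal{K}$; $\Delta^*(\delta_T,\delta_X)=\{M(\alpha,\beta):(\alpha,\beta)\in\mathcal{K}^*\}$. $p(d_2,c_2)=(d'_2,c'_2)$ with $d'_2=d_2$ if $d_2\in\{0,A\}$, else $d'_2\in\{1,\dots,q-1\}$, $d'_2\equiv d_2\pmod{q-1}$; $c'_2=0$ if $c_2=0$; $c'_2=\delta-\eta d'_2$ if $c_2=\delta-\eta d_2$; else $c'_2\in\{1,\dots,q-1\}$, $c'_2\equiv c_2\pmod{q-1}$. Linear $\pi_{(\delta_T,\delta_X)}(M(d_2,c_2))=M(p(d_2,c_2))$, except if (H) and $(d_2,c_2)=(\delta/\eta,0)$: with $\delta/\eta=k(q-1)+r$, $r\in\{1,\dots,q-1\}$, $\pi(M(\delta/\eta,0))=M(r,0)+M(r,\eta k(q-1))-M(r,q-1)$. $\mathcal{G}$ is the union over all $(\delta_T,\delta_X)\in\mathbb{Z}\times\mathbb{N}$ with $\delta\ge0$ of $\{M-\pi_{(\delta_T,\delta_X)}(M):M\in\mathcal{M}(\delta_T,\delta_X)\setminus\Delta^*(\delta_T,\delta_X)\}$.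 *)

(* Defs.v *)
From HB Require Import structures.
From mathcomp Require Import all_boot all_order all_algebra.
From mathcomp Require Import mpoly.
Set Implicit Arguments.
Unset Strict Implicit.
Unset Printing Implicit Defensive.
Import Order.TTheory GRing.Theory Num.Theory.
Local Open Scope ring_scope.

(* Monomials of R = F_q[T1,T2,X1,X2] are multinomials 'X_{1..4};
   variable indices: 0 = T1, 1 = T2, 2 = X1, 3 = X2. *)
Definition mon (c1 c2 d1 d2 : nat) : 'X_{1..4} :=
  [multinom nth 0%N [:: c1; c2; d1; d2] i | i < 4].

Definition eT1 (m : 'X_{1..4}) : nat := m (inord 0).
Definition eT2 (m : 'X_{1..4}) : nat := m (inord 1).
Definition eX1 (m : 'X_{1..4}) : nat := m (inord 2).
Definition eX2 (m : 'X_{1..4}) : nat := m (inord 3).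

Section Defs.
Variables (q eta : nat).

Definition bideg (m : 'X_{1..4}) : int * nat :=
  ((eT1 m)%:Z + (eT2 m)%:Z - (eta * eX1 m)%N%:Z, (eX1 m + eX2 m)%N).

Definition inMon (dT : int) (dX : nat) (m : 'X_{1..4}) : bool :=
  bideg m == (dT, dX).

(* delta = dT + eta * dX (an integer), and its value as a natural number
   (used only when delta >= 0) *)
Definition delta (dT : int) (dX : nat) : int := dT + (eta * dX)%N%:Z.
Definition deltan (dT : int) (dX : nat) : nat := `|delta dT dX|%N.

Definition inP (dT : int) (dX : nat) (a b : nat) : bool :=
  (a <= dX)%N && ((eta * a + b)%N%:Z <= delta dT dX).

Definition Mo (dT : int) (dX : nat) (d2 c2 : nat) : 'X_{1..4} :=
  mon (deltan dT dX - eta * d2 - c2) c2 (dX - d2) d2.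

Definition A (dT : int) (dX : nat) : rat :=
  if 0 <= dT then dX%:R else (delta dT dX)%:~R / eta%:R.

Definition inAX (dT : int) (dX : nat) (al : nat) : bool :=
  (al%:Z <= Num.min (Num.floor (A dT dX)) (q%:Z - 1)) || (al%:R == A dT dX).

Definition inK (dT : int) (dX : nat) (al be : nat) : bool :=
  inAX dT dX al &&
  ((be%:Z <= Num.min (delta dT dX - (eta * al)%N%:Z) q%:Z - 1)
   || (be%:Z == delta dT dX - (eta * al)%N%:Z)).

Definition condH (dT : int) (dX : nat) : bool :=
  [&& (2 <= eta)%N, dT < 0, (eta%:Z %| dT)%Z &
      q%:Z <= dX%:Z + (dT %/ eta%:Z)%Z].

(* (alpha, beta) \in \mathcal{K}^*; note delta/eta is an integer under (H) *)
Definition inKstar (dT : int) (dX : nat) (al be : nat) : bool :=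
  inK dT dX al be &&
  ~~ (condH dT dX && (al%:R == A dT dX) && (be == 0%N)).

Definition inDeltaStar (dT : int) (dX : nat) (m : 'X_{1..4}) : Prop :=
  exists al be : nat, inKstar dT dX al be /\ m = Mo dT dX al be.

(* the unique element of {1, ..., q-1} congruent to n (n >= 1) mod q-1 *)
Definition red (n : nat) : nat := ((n - 1) %% (q - 1)).+1.

Definition p_d (dT : int) (dX : nat) (d2 : nat) : nat :=
  if (d2 == 0%N) || (d2%:R == A dT dX) then d2 else red d2.

Definition p_c (dT : int) (dX : nat) (d2 c2 : nat) : nat :=
  if c2 == 0%N then 0%N
  else if c2%:Z == delta dT dX - (eta * d2)%N%:Z
       then (deltan dT dX - eta * p_d dT dX d2)%N
       else red c2.

Definition pi (F : finFieldType) (dT : int) (dX : nat) (d2 c2 : nat)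
  : {mpoly F[4]} :=
  let dl := deltan dT dX in
  if condH dT dX && (d2%:R == A dT dX) && (c2 == 0%N) then
    (* dl / eta = k (q-1) + r with r in {1, ..., q-1} *)
    let r := red (dl %/ eta) in
    let k := ((dl %/ eta - r) %/ (q - 1))%N in
    'X_[Mo dT dX r 0] + 'X_[Mo dT dX r (eta * k * (q - 1))]
      - 'X_[Mo dT dX r (q - 1)]
  else 'X_[Mo dT dX (p_d dT dX d2) (p_c dT dX d2 c2)].

Definition inG (F : finFieldType) (g : {mpoly F[4]}) : Prop :=
  exists (dT : int) (dX : nat) (m : 'X_{1..4}),
    [/\ 0 <= delta dT dX, inMon dT dX m, ~ inDeltaStar dT dX m &
        g = 'X_[m] - pi F dT dX (eX2 m) (eT2 m)].

End Defs.

Definition mlt (m' m : 'X_{1..4}) : bool :=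
  [|| (eX1 m' + eX2 m' < eX1 m + eX2 m)%N,
      (eX1 m' + eX2 m' == eX1 m + eX2 m)%N && (eX2 m' < eX2 m)%N,
      [&& eX1 m' == eX1 m, eX2 m' == eX2 m & (eT2 m' < eT2 m)%N] |
      [&& eX1 m' == eX1 m, eX2 m' == eX2 m, eT2 m' == eT2 m &
          (eT1 m' < eT1 m)%N]].

Definition is_lead (F : finFieldType) (g : {mpoly F[4]}) (l : 'X_{1..4})
  : Prop :=
  l \in msupp g /\ forall m', m' \in msupp g -> m' != l -> mlt m' l.

Definition mdivides (l m : 'X_{1..4}) : bool :=
  [forall i : 'I_4, (l i <= m i)%N].

(* Main.v *)
Require Import Defs.
From HB Require Import structures.
From mathcomp Require Import all_boot all_order all_algebra.
From mathcomp Require Import mpoly zify.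
From Stdlib Require Classical_Prop.
Import Order.TTheory GRing.Theory Num.Theory.
Local Open Scope ring_scope.
Set Implicit Arguments.
Unset Strict Implicit.
Lemma dn eta dT dX : 0 <= delta eta dT dX -> (deltan eta dT dX)%:Z = delta eta dT dX.
Proof. rewrite /deltan. lia. Qed.
Lemma eqA eta dT dX n : 0 <= delta eta dT dX ->
  (n%:R == A eta dT dX) = if 0 <= dT then n == dX else (eta * n == deltan eta dT dX)%N.
Proof.
move=> h0; rewrite /A; case: ifP => hT; first by rewrite eqr_nat.
have he : (0 < eta)%N by move: h0 hT; rewrite /delta; nia.
rewrite -[n%:R]divr1 eqr_div ?oner_neq0 ?pnatr_eq0 -?lt0n // mulr1.
rewrite -(dn h0) -natrM eqr_nat mulnC //.
Qed.
Lemma floorA eta dT dX n : 0 <= delta eta dT dX ->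
  (if 0 <= dT then (n <= dX)%N else (eta * n <= deltan eta dT dX)%N) ->
  n%:Z <= Num.floor (A eta dT dX).
Proof.
move=> h0; rewrite floor_ge_int /A; case: ifP => hT h; first by rewrite ler_nat.
have he : (0 < eta)%N by move: h0 hT; rewrite /delta; nia.
rewrite ler_pdivlMr ?ltr0n // -(dn h0) /= -natrM ler_nat mulnC //.
Qed.
Lemma condHE q eta (k : int) dX : (0 < eta)%N ->
  condH q eta (k * eta%:Z) dX = [&& (2 <= eta)%N, k * eta%:Z < 0 & q%:Z <= dX%:Z + k].
Proof.
move=> he; rewrite /condH mulzK ?dvdz_mull //; lia.
Qed.
Lemma eT1mon a b c d : eT1 (mon a b c d) = a. Proof. by rewrite /eT1 /mon mnmE inordK. Qed.
Lemma eT2mon a b c d : eT2 (mon a b c d) = b. Proof. by rewrite /eT2 /mon mnmE inordK. Qed.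
Lemma eX1mon a b c d : eX1 (mon a b c d) = c. Proof. by rewrite /eX1 /mon mnmE inordK. Qed.
Lemma eX2mon a b c d : eX2 (mon a b c d) = d. Proof. by rewrite /eX2 /mon mnmE inordK. Qed.
Definition Pm (q eta : nat) (m : 'X_{1..4}) : Prop :=
  ((eX2 m < q)%N \/ eX1 m = 0%N \/ (eta = 1%N /\ eT1 m = 0%N /\ eT2 m = 0%N))
  /\ (eT1 m = 0%N \/ (eT2 m < q)%N).
Lemma mn (a b c : int) : (c <= Num.min a b - 1) = (c < a) && (c < b).
Proof. rewrite /Num.min. case: ifP; lia. Qed.

Lemma L1a q eta dT dX al be : (1 < q)%N -> 0 <= delta eta dT dX ->
  inKstar q eta dT dX al be -> Pm q eta (Mo eta dT dX al be).
Proof.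
move=> hq h0; have hD := dn h0.
have hdel : delta eta dT dX = dT + (eta * dX)%N by [].
rewrite /Pm /Mo !(eT1mon, eT2mon, eX1mon, eX2mon).
rewrite /inKstar /inK /inAX => /andP [/andP [hal hbe] hn].
move: hbe; rewrite mn => hbe.
case/orP: hal => [|].
  rewrite le_min => hal; lia.
rewrite eqA //; case: ifP => hT.
  move/eqP => hal; lia.
move=> /eqP hal.
have he : (0 < eta)%N by move: h0 hT; rewrite /delta; nia.
move: hn; rewrite eqA // hT.
have hdT: dT = (al%:Z - dX%:Z) * eta%:Z by lia.
have -> : condH q eta dT dX = [&& (2 <= eta)%N, (al%:Z - dX%:Z) * eta%:Z < 0 & q%:Z <= dX%:Z + (al%:Z - dX%:Z)].
  by rewrite hdT condHE.
lia.
Qed.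
Lemma monE m : m = mon (eT1 m) (eT2 m) (eX1 m) (eX2 m).
Proof.
apply/mnmP => i; rewrite /mon mnmE.
case: i => [[|[|[|[|i]]]] hi] //=; rewrite /eT1 /eT2 /eX1 /eX2;
  congr (m _); apply/val_inj; by rewrite /= inordK.
Qed.
Lemma inMonE eta dT dX m : inMon eta dT dX m ->
  dT = (eT1 m)%:Z + (eT2 m)%:Z - (eta * eX1 m)%N%:Z /\ dX = (eX1 m + eX2 m)%N.
Proof. by case/eqP. Qed.

Ltac L := lia.
Lemma L1b q eta dT dX m : 0 <= delta eta dT dX -> inMon eta dT dX m ->
  Pm q eta m -> inDeltaStar q eta dT dX m.
Proof.
move=> h0 /inMonE [hT hX]; rewrite /Pm => hP; have hD := dn h0.
have hdel : delta eta dT dX = dT + (eta * dX)%N by [].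
exists (eX2 m), (eT2 m); split; last first.
  rewrite /Mo {1}(monE m); congr mon; L.
rewrite /inKstar /inK /inAX mn.
apply/andP; split; [apply/andP; split|].
- case: hP => [[h1|[h1|[h1 [h2 h3]]]] _].
  + apply/orP; left; rewrite le_min; apply/andP; split; last by L.
    by apply: floorA => //; case: ifP => _; L.
  + apply/orP; right; rewrite eqA //; have -> : (0 <= dT) = true by L.
    apply/eqP; L.
  + apply/orP; right; rewrite eqA //; case: ifP => hh; apply/eqP; L.
- L.
- apply/negP => /andP [/andP [hc]]; rewrite eqA //; case: ifP => hT0.
    by move: hc; rewrite /condH; L.
  move=> he2 hc2.
  have he : (0 < eta)%N by move: h0 hT0; rewrite /delta; nia.
  have hdT : dT = (- (eX1 m)%:Z) * eta%:Z by L.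
  move: hc; rewrite hdT condHE //; L.
Qed.

Lemma L2 q eta l m : mdivides l m -> Pm q eta m -> Pm q eta l.
Proof.
move=> /forallP h; have h0 := h (inord 0); have h1 := h (inord 1);
have h2 := h (inord 2); have h3 := h (inord 3).
rewrite /Pm /eT1 /eT2 /eX1 /eX2; L.
Qed.
Lemma mlt_asym a b : mlt a b -> mlt b a -> False.
Proof. rewrite /mlt; L. Qed.
Lemma L4 (F : finFieldType) (P : {mpoly F[4]}) m :
  (forall k, P@_k != 0 -> mlt k m) ->
  is_lead ('X_[m] - P) m /\ (forall l, is_lead ('X_[m] - P) l -> l = m).
Proof.
move=> hP.
have hPm : P@_m = 0.
  by case: (eqVneq P@_m 0) => // /hP h; case: (mlt_asym h h).
have hm : m \in msupp ('X_[m] - P).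
  by rewrite mcoeff_msupp mcoeffB mcoeffX eqxx hPm subr0 oner_neq0.
have hk : forall k, k \in msupp ('X_[m] - P) -> k != m -> mlt k m.
  move=> k; rewrite mcoeff_msupp mcoeffB mcoeffX => hk; rewrite eq_sym => /negbTE hne.
  by move: hk; rewrite hne sub0r oppr_eq0 => /hP.
split; first by split.
move=> l [hl hl']; apply/eqP; apply: contraT => hne.
have h1 := hk l hl hne; have h2 : mlt m l by apply: hl' => //; rewrite eq_sym.
by case: (mlt_asym h1 h2).
Qed.
Lemma redP q n : (1 < q)%N -> (0 < n)%N ->
  [/\ (red q n <= n)%N, (red q n < q)%N & ((n < q)%N -> red q n = n)].
Proof.
move=> hq hn; rewrite /red; split.
- have := leq_mod (n - 1) (q - 1); L.
- have := ltn_pmod (n - 1) (_ : 0 < q - 1)%N; L.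
- move=> hnq; rewrite modn_small; L.
Qed.
Lemma mltMo2 eta dT dX m r s : dX = (eX1 m + eX2 m)%N -> (r < eX2 m)%N ->
  mlt (Mo eta dT dX r s) m.
Proof. rewrite /mlt /Mo !(eT1mon, eT2mon, eX1mon, eX2mon); L. Qed.
Lemma mltMo3 eta dT dX m s : dX = (eX1 m + eX2 m)%N -> (s < eT2 m)%N ->
  mlt (Mo eta dT dX (eX2 m) s) m.
Proof. rewrite /mlt /Mo !(eT1mon, eT2mon, eX1mon, eX2mon); L. Qed.
Lemma coef1 (F : finFieldType) (a k : 'X_{1..4}) :
  ('X_[a] : {mpoly F[4]})@_k != 0 -> k = a.
Proof. rewrite mcoeffX; case: (a =P k) => [->|_] //=; by rewrite eqxx. Qed.
Lemma coef3 (F : finFieldType) (a b c k : 'X_{1..4}) :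
  ('X_[a] + 'X_[b] - 'X_[c] : {mpoly F[4]})@_k != 0 -> k = a \/ k = b \/ k = c.
Proof.
rewrite mcoeffB mcoeffD !mcoeffX.
case: (a =P k) => [->|_]; first by left.
case: (b =P k) => [->|_]; first by right; left.
case: (c =P k) => [->|_]; first by right; right.
by rewrite /= addr0 subr0 eqxx.
Qed.
Lemma L3 q eta (F : finFieldType) dT dX m : (1 < q)%N -> 0 <= delta eta dT dX ->
  inMon eta dT dX m -> ~ inDeltaStar q eta dT dX m ->
  forall k, (Defs.pi q eta F dT dX (eX2 m) (eT2 m))@_k != 0 -> mlt k m.
Proof.
move=> hq h0 hM hnD.
have hnP : ~ Pm q eta m by move=> hP; apply: hnD; exact: L1b hM hP.
move: hM => /inMonE [hT hX]; have hD := dn h0.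
have hdel : delta eta dT dX = dT + (eta * dX)%N by [].
rewrite /Pm in hnP.
rewrite /Defs.pi /=; case: ifP => hH k.
- have hr : (red q (deltan eta dT dX %/ eta) < eX2 m)%N.
    move: hH; rewrite eqA //; case: ifP => hT0.
      by rewrite /condH; L.
    move=> /andP [/andP [hc /eqP hx] hc2].
    have he : (0 < eta)%N by move: h0 hT0; rewrite /delta; nia.
    have hdT : dT = (- (eX1 m)%:Z) * eta%:Z by L.
    have hc' : [&& (2 <= eta)%N, (- (eX1 m)%:Z) * eta%:Z < 0 & q%:Z <= dX%:Z + (- (eX1 m)%:Z)].
      by rewrite -condHE // -hdT.
    rewrite -hx mulKn //.
    have hpos : (0 < eX2 m)%N by L.
    have [_ h2 _] := redP hq hpos; L.
  by move/coef3 => [->|[->|->]]; apply: mltMo2.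
- move/coef1 => ->.
  have contra : ((eX2 m = 0 \/ eX2 m < q)%N \/ ((eX2 m)%:R == A eta dT dX)) ->
      (eT2 m = 0 \/ eT1 m = 0 \/ eT2 m < q)%N -> False.
    move=> hd hc.
    have [hq2 [hd1 hne]] : (q <= eX2 m)%N /\ eX1 m <> 0%N /\ ~ (eta = 1%N /\ eT1 m = 0%N /\ eT2 m = 0%N) by L.
    have hA : (eX2 m)%:R == A eta dT dX by case: hd => [hd|//]; L.
    move: hA hH; rewrite eqA //; case: ifP => hT0.
      move=> /eqP hx; L.
    move=> /eqP hx.
    have he : (0 < eta)%N by move: h0 hT0; rewrite /delta; nia.
    have hdT : dT = (- (eX1 m)%:Z) * eta%:Z by L.
    have -> : condH q eta dT dX = [&& (2 <= eta)%N, (- (eX1 m)%:Z) * eta%:Z < 0 & q%:Z <= dX%:Z + (- (eX1 m)%:Z)].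
      by rewrite hdT condHE.
    L.
  have hpd : (p_d q eta dT dX (eX2 m) < eX2 m)%N \/
     (p_d q eta dT dX (eX2 m) = eX2 m /\ ((eX2 m = 0 \/ eX2 m < q)%N \/ ((eX2 m)%:R == A eta dT dX))).
    rewrite /p_d; case: ifP => h.
      right; split => //; case/orP: h => h; [left; left; L | right; exact h].
    have hpos : (0 < eX2 m)%N by L.
    have [h1 h2 h3] := redP hq hpos; L.
  case: hpd => [hlt | [heq hd]].
    by apply: mltMo2.
  rewrite /p_c heq; case: ifP => hc0.
    by exfalso; apply: contra hd _; L.
  case: ifP => hc1.
    by exfalso; apply: contra hd _; L.
  have hpos : (0 < eT2 m)%N by L.
  have [h1 h2 h3] := redP hq hpos.
  case: (ltnP (red q (eT2 m)) (eT2 m)) => hl.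
    by apply: mltMo3.
  by exfalso; apply: contra hd _; L.
Qed.
Theorem lemma3p9 (F : finFieldType) (eta : nat) (m : 'X_{1..4}) :
  (exists (dT : int) (dX : nat),
      0 <= delta eta dT dX /\ inDeltaStar #|F| eta dT dX m)
  <->
  ~ (exists (g : {mpoly F[4]}) (l : 'X_{1..4}),
        [/\ inG #|F| eta g, is_lead g l & mdivides l m]).
Proof.
have hq : (1 < #|F|)%N := card_finNzRing_gt1 F.
split.
- move=> [dT [dX [h0 [al [be [hK ->]]]]]] [g [l [[dT' [dX' [m' [h0' hM hnD ->]]]] hl hdiv]]].
  have hP := L1a hq h0 hK.
  have [_ hu] := L4 (L3 (F:=F) hq h0' hM hnD).
  move: hdiv; rewrite (hu l hl) => hdiv.
  apply: hnD; apply: L1b h0' hM _; exact: L2 hdiv hP.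
- move=> hn.
  have h0 : 0 <= delta eta (bideg eta m).1 (bideg eta m).2 by rewrite /bideg /delta /=; L.
  have hM : inMon eta (bideg eta m).1 (bideg eta m).2 m.
    by rewrite /inMon -surjective_pairing.
  case: (Classical_Prop.classic (inDeltaStar #|F| eta (bideg eta m).1 (bideg eta m).2 m)) => hD.
    by exists (bideg eta m).1, (bideg eta m).2.
  exfalso; apply: hn.
  exists ('X_[m] - Defs.pi #|F| eta F (bideg eta m).1 (bideg eta m).2 (eX2 m) (eT2 m)), m.
  split.
  + by exists (bideg eta m).1, (bideg eta m).2, m; split.
  + by case: (L4 (L3 (F:=F) hq h0 hM hD)).
  + by apply/forallP => i.
Qed.
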